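(* Let $(X_n)_{n\in\mathbb{N}}$ be i.i.d. real random variables with distribution function $F$ and survival function $\bar F(x)=\mathbb{P}(X_1>x)$, with $\bar F(x)=x^{-\alpha}L(x)$ for all $x>x_0$, where $x_0>0$, $\alpha>0$ and $L$ is slowly varying, and assume $X_1$ has a density $f$ that is non-increasing on $[x_1,\infty)$ for some $x_1$. Let $a_n=F^{\leftarrow}(1-1/n)$ and, for $n\ge2$ and $x>0$, $t_n(x)=a_n x^{\log n/\alpha}$ and \[ g_n(x)=n\,a_n\,\frac{\alpha}{\log n}\,x^{\frac{\log n}{\alpha}-1}\,F^{n-1}(t_n(x))\,f(t_n(x)), \] which is the density on $(0,\infty)$ of $Z_n=(X_{(n)}/a_n)^{\alpha/\log n}$, $X_{(n)}=\max_{1\le i\le n}X_i$. Then for every fixed $M>1$, \[ \lim_{n\to\infty}\frac{1}{\log n}\log g_n(x)=-\log x \] uniformly in $x\in[1,M]$.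
   Context: A function $L:(0,\infty)\to(0,\infty)$ is slowly varying if $\lim_{x\to\infty}L(tx)/L(x)=1$ for all $t>0$. $F^{\leftarrow}(u)=\inf\{x\in\mathbb{R}: F(x)\ge u\}$ denotes the left-inverse of $F$. *)

(* Defs.v *)
From HB Require Import structures.
From mathcomp Require Import all_boot all_order all_algebra.
From mathcomp Require Import all_classical all_reals all_analysis.
Set Implicit Arguments. Unset Strict Implicit. Unset Printing Implicit Defensive.
Import Order.TTheory GRing.Theory Num.Theory.
Import numFieldNormedType.Exports.
Local Open Scope classical_set_scope.
Local Open Scope ring_scope.

Definition slowly_varying {R : realType} (L : R -> R) : Prop :=
  (forall x : R, 0 < x -> 0 < L x) /\
  (forall t : R, 0 < t -> L (t * x) / L x @[x --> +oo%R] --> (1 : R)).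

Definition gen_left_inverse {R : realType} (F : R -> R) (u : R) : R :=
  inf [set x : R | u <= F x].

Definition distr_fun {d} {T : measurableType d} {R : realType}
  (P : probability T R) (X : T -> R) (x : R) : R :=
  fine (P [set w | X w <= x]).

(* Main.v *)
Require Import Defs.
From HB Require Import structures.
From mathcomp Require Import all_boot all_order all_algebra.
From mathcomp Require Import all_classical all_reals all_analysis.
From mathcomp Require Import lra ring measurable_realfun.
Import Order.TTheory GRing.Theory Num.Theory.
Import numFieldNormedType.Exports.
Local Open Scope classical_set_scope.
Local Open Scope ring_scope.
Set Implicit Arguments. Unset Strict Implicit.
Lemma log_doubling_aux (R : realType) (h : R -> R) (X0 B eta : R) :
  1 <= X0 -> 0 <= eta -> (forall x, X0 <= x -> `|h (2*x) - h x| <= eta) ->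
  (forall s, X0 <= s <= 2*X0 -> `|h s| <= B) ->
  forall k : nat, forall y, X0 <= y <= 2^+k * X0 ->
    `|h y| <= B + (ln (y / X0) / ln 2 + 1) * eta.
Proof.
move=> X01 eta0 hd hB k; have ln2 : 0 < ln (2:R) by rewrite ln_gt0 // ltr1n.
have X00 : 0 < X0 by lra.
elim: k => [|k IH] y /andP[y1 y2].
  rewrite expr0 mul1r in y2.
  have -> : y = X0 by lra.
  rewrite divff ?gt_eqF // ln1 mul0r add0r mul1r.
  apply: le_trans (hB X0 _) _; first by apply/andP; split; lra.
  lra.
have y0 : 0 < y by lra.
have lnge : 0 <= ln (y / X0) by rewrite ln_ge0 // ler_pdivlMr // mul1r.
have [y3|y3] := lerP y (2 * X0).
  apply: le_trans (hB y _) _; first by apply/andP; split.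
  have : 0 <= (ln (y / X0) / ln 2 + 1) * eta.
    apply: mulr_ge0 => //; apply: addr_ge0 => //; exact: divr_ge0 (ltW ln2).
  lra.
have H1 : X0 <= y / 2 <= 2 ^+ k * X0.
  apply/andP; split; first lra.
  rewrite exprS in y2; lra.
have := IH _ H1.
have := hd (y/2) (proj1 (andP H1)).
have -> : 2 * (y / 2) = y by field.
have -> : ln (y / 2 / X0) = ln (y / X0) - ln 2.
  rewrite (_ : y / 2 / X0 = (y / X0) * 2^-1); last by field; lra.
  have p1 : y / X0 \in Num.pos by rewrite posrE divr_gt0.
  have p2 : (2:R)^-1 \in Num.pos by rewrite posrE invr_gt0.
  have p3 : (2:R) \in Num.pos by rewrite posrE.
  by rewrite lnM // lnV.
have -> : (ln (y / X0) - ln 2) / ln 2 = ln (y / X0) / ln 2 - 1.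
  by field; lra.
move=> A1 A2.
have : `|h y| <= `|h (y/2)| + `|h y - h (y/2)|.
  by rewrite -[h y in X in X <= _](subrK (h (y/2))) addrC ler_normD.
lra.
Qed.

Lemma log_doubling (R : realType) (h : R -> R) (X0 B eta : R) :
  1 <= X0 -> 0 <= eta -> (forall x, X0 <= x -> `|h (2*x) - h x| <= eta) ->
  (forall s, X0 <= s <= 2*X0 -> `|h s| <= B) ->
  forall y, X0 <= y -> `|h y| <= B + (ln y / ln 2 + 1) * eta.
Proof.
move=> X01 eta0 hd hB y yX.
have ln2 : 0 < ln (2:R) by rewrite ln_gt0 // ltr1n.
set k := (Num.truncn y).+1.
have yk : y <= 2 ^+ k * X0.
  have h1 : y < k%:R by apply: truncnS_gt.
  have h2 : (k%:R : R) <= 2 ^+ k.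
    rewrite -natrX ler_nat; exact: ltnW (ltn_expl _ (ltnSn 1)).
  have : 2 ^+ k <= 2 ^+ k * X0 :> R.
    by rewrite ler_peMr // exprn_ge0.
  lra.
apply: le_trans (@log_doubling_aux R h X0 B eta X01 eta0 hd hB k y _) _.
  by apply/andP.
rewrite lerD2l ler_wpM2r // lerD2r ler_pM2r ?invr_gt0 //.
rewrite ler_ln ?posrE ?divr_gt0 //; try lra.
by rewrite ler_pdivrMr; [rewrite ler_peMr; lra|lra].
Qed.

Lemma ln_le_sub1 (R : realType) (r : R) : 0 < r -> ln r <= r - 1.
Proof.
move=> r0; have := @le_ln1Dx R (r - 1) ltac:(lra).
by rewrite addrC subrK.
Qed.

Lemma ln_ge_1sub (R : realType) (r : R) : 0 < r -> 1 - r^-1 <= ln r.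
Proof.
move=> r0; have r1 : 0 < r^-1 by rewrite invr_gt0.
have := ln_le_sub1 r1.
rewrite lnV ?posrE //; lra.
Qed.

Lemma lnG_eq (R : realType) (L G : R -> R) (x0 alpha x : R) :
  0 < x0 -> (forall x, 0 < x -> 0 < L x) ->
  (forall x, x0 < x -> G x = x `^ (- alpha) * L x) -> x0 < x ->
  ln (G x) = ln (L x) - alpha * ln x.
Proof.
move=> x00 Lpos GL xx; rewrite GL // lnM ?posrE ?ln_powR; first by rewrite mulNr addrC.
  by apply: powR_gt0; lra.
by apply: Lpos; lra.
Qed.

Lemma slow_log (R : realType) (L G : R -> R) (x0 alpha : R) :
  0 < alpha -> 0 < x0 ->
  (forall x, 0 < x -> 0 < L x) ->
  L (2 * x) / L x @[x --> +oo] --> (1:R) ->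
  (forall u v, u <= v -> G v <= G u) ->
  (forall x, x0 < x -> G x = x `^ (- alpha) * L x) ->
  forall delta, 0 < delta -> exists Y, 1 <= Y /\ x0 < Y /\
    forall y, Y <= y -> `|ln (L y)| <= delta * ln y.
Proof.
move=> a0 x00 Lpos Lcvg Gdec GL delta d0.
have ln2 : 0 < ln (2:R) by rewrite ln_gt0 // ltr1n.
set eta := delta * ln 2 / 4.
have eta0 : 0 < eta by rewrite /eta; apply: divr_gt0 => //; exact: mulr_gt0.
set e' := Num.min (1/2) (eta / 2).
have e'0 : 0 < e' by rewrite lt_min; apply/andP; split; lra.
have e'1 : e' <= 1/2 by rewrite ge_min lexx.
have e'2 : e' <= eta/2 by rewrite ge_min lexx orbT.
move/cvgrPdist_le: Lcvg => /(_ e' e'0) [M0 [_ HM0]].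
set X0 := Num.max 1 (Num.max (x0 + 1) (M0 + 1)).
have X01 : 1 <= X0 by rewrite le_max lexx.
have X0x : x0 < X0.
  have : x0 + 1 <= X0 by rewrite !le_max lexx orbT.
  lra.
have X0M : M0 < X0.
  have : M0 + 1 <= X0 by rewrite !le_max lexx !orbT.
  lra.
have hd : forall x, X0 <= x -> `|ln (L (2*x)) - ln (L x)| <= eta.
  move=> x xX; have x0' : 0 < x by lra.
  have := HM0 x ltac:(lra); set r := L (2 * x) / L x => Hr.
  have L1 := Lpos x x0'; have L2 := Lpos (2*x) ltac:(lra).
  have r0 : 0 < r by rewrite /r divr_gt0.
  have -> : ln (L (2 * x)) - ln (L x) = ln r.
    by rewrite /r ln_div ?posrE.
  move: Hr; rewrite ler_norml => /andP[Hr1 Hr2].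
  rewrite ler_norml; apply/andP; split.
  - have := ln_ge_1sub r0.
    have : r^-1 - 1 <= 2 * e'.
      have -> : r^-1 - 1 = (1 - r) / r by field; lra.
      rewrite ler_pdivrMr //; nra.
    lra.
  - have := ln_le_sub1 r0; lra.
have Gpos : forall x, x0 < x -> 0 < G x.
  move=> x xx0; rewrite GL //; apply: mulr_gt0; [apply: powR_gt0; lra | apply: Lpos; lra].
set B := `|ln (G X0)| + `|ln (G (2 * X0))| + alpha * ln (2 * X0).
have hB : forall s, X0 <= s <= 2 * X0 -> `|ln (L s)| <= B.
  move=> s /andP[s1 s2].
  have e1 : ln (L s) = ln (G s) + alpha * ln s.
    rewrite (lnG_eq x00 Lpos GL); [ring|lra].
  have g1 : ln (G (2 * X0)) <= ln (G s).
    by rewrite ler_ln ?posrE ?Gpos ?Gdec //; lra.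
  have g2 : ln (G s) <= ln (G X0).
    by rewrite ler_ln ?posrE ?Gpos ?Gdec //; lra.
  have l1 : 0 <= ln s by rewrite ln_ge0 //; lra.
  have l2 : ln s <= ln (2 * X0) by rewrite ler_ln ?posrE //; lra.
  have n1 := ler_norm (ln (G X0)); have n2 := ler_normr (ln (G (2 * X0))).
  have n3 := ler_norm (- ln (G (2 * X0))).
  rewrite e1 /B ler_norml; apply/andP; split.
    have : 0 <= alpha * ln s by apply: mulr_ge0; lra.
    have := normr_ge0 (ln (G X0)).
    rewrite normrN in n3; have n4 : - ln (G X0) <= `|ln (G X0)| by rewrite -normrN ler_norm.
    have : 0 <= alpha * ln (2 * X0) by apply: mulr_ge0; lra.
    lra.
  have : alpha * ln s <= alpha * ln (2 * X0) by rewrite ler_pM2l.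
  have := normr_ge0 (ln (G (2 * X0))).
  lra.
have main := log_doubling X01 (ltW eta0) hd hB.
set c := (B + eta) * 4 / (3 * delta).
exists (Num.max X0 (expR c)); split; first by rewrite le_max X01.
split; first by apply: lt_le_trans X0x _; rewrite le_max lexx.
move=> y; rewrite ge_max => /andP[yX yc].
apply: le_trans (main y yX) _.
have : c <= ln y by rewrite -[c]expRK ler_ln ?posrE ?expR_gt0 //; lra.
rewrite /c ler_pdivrMr; last lra.
have -> : (ln y / ln 2 + 1) * eta = delta / 4 * ln y + eta.
  by rewrite /eta; field; lra.
lra.
Qed.

Lemma ratio_bounds (R : realType) (L G : R -> R) (x0 alpha : R) :
  0 < alpha -> 0 < x0 ->
  (forall x, 0 < x -> 0 < L x) ->
  L (2 * x) / L x @[x --> +oo] --> (1:R) ->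
  (forall x, x0 < x -> G x = x `^ (- alpha) * L x) ->
  exists theta C X, 0 <= theta < 1 /\ 0 < C /\ x0 < X /\
    forall x, X <= x -> G (2 * x) <= theta * G x /\ G x <= C * G (2 * x).
Proof.
move=> a0 x00 Lpos Lcvg GL.
set q : R := 2 `^ (- alpha).
have q0 : 0 < q by apply: powR_gt0.
have q1 : q < 1.
  rewrite ltNge; apply/negP => q1.
  have := ln_ge0 q1; rewrite /q ln_powR.
  have : 0 < ln (2:R) by rewrite ln_gt0 // ltr1n.
  nra.
set e := Num.min (1/2) ((1 - q) / (2 * q)).
have e0 : 0 < e by rewrite lt_min; apply/andP; split; [lra | apply: divr_gt0; lra].
have e1 : e <= 1/2 by rewrite ge_min lexx.
have e2 : e <= (1 - q) / (2 * q) by rewrite ge_min lexx orbT.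
have qe : q * e <= (1 - q) / 2.
  move: e2; rewrite ler_pdivlMr; last lra. nra.
move/cvgrPdist_le: Lcvg => /(_ e e0) [M0 [_ HM0]].
exists (q * (1 + e)), (2 / q), (Num.max (x0 + 1) (M0 + 1)).
split; first by apply/andP; split; nra.
split; first exact: divr_gt0.
split.
  have : x0 + 1 <= Num.max (x0 + 1) (M0 + 1) by rewrite le_max lexx.
  lra.
move=> x; rewrite ge_max => /andP[xx0 xM].
have x0' : 0 < x by lra.
have L1 := Lpos x x0'; have L2 := Lpos (2*x) ltac:(lra).
have := HM0 x ltac:(lra); rewrite ler_norml => /andP[r1 r2].
have rr : L (2 * x) = (L (2 * x) / L x) * L x by field; lra.
have r1' : L (2 * x) <= (1 + e) * L x by rewrite rr; nra.
have r2' : (1 - e) * L x <= L (2 * x) by rewrite [X in _ <= X]rr; nra.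
have p0 : 0 < x `^ (- alpha) by apply: powR_gt0.
have G2 : G (2 * x) = q * (x `^ (- alpha) * L (2 * x)).
  rewrite GL; last lra.
  by rewrite powRM ?mulrA //; lra.
rewrite G2 GL; last lra.
split.
  have : x `^ (- alpha) * L (2 * x) <= x `^ (- alpha) * ((1 + e) * L x).
    by rewrite ler_pM2l.
  nra.
have : x `^ (- alpha) * ((1 - e) * L x) <= x `^ (- alpha) * L (2 * x).
  by rewrite ler_pM2l.
have : 0 < x `^ (- alpha) * L x by apply: mulr_gt0.
have -> : 2 / q * (q * (x `^ (- alpha) * L (2 * x))) = 2 * (x `^ (- alpha) * L (2 * x)).
  by field; lra.
nra.
Qed.
Lemma dens_diff (R : realType) (f : R -> R) (Phi : R -> \bar R) (x1 : R) :
  measurable_fun setT f -> (forall x, 0 <= f x) ->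
  (forall x, Phi x = (\int[lebesgue_measure]_(y in `]-oo, x]) (f y)%:E)%E) ->
  (forall x, Phi x \is a fin_num) ->
  (forall x y, x1 <= x -> x <= y -> f y <= f x) ->
  forall u v, x1 <= u -> u <= v ->
    (v - u) * f v <= fine (Phi v) - fine (Phi u) <= (v - u) * f u.
Proof.
move=> mf f0 hP hfin hdec u v uv1 uv.
have mfE : measurable_fun setT (fun y => (f y)%:E) by apply/measurable_EFinP.
have setE : [set` `]-oo, v]] = [set` `]-oo, u]] `|` [set` `]u, v]].
  apply/seteqP; split => y /=; rewrite !in_itv /=.
    by case: (leP y u) => yu /= yv; [left | right].
  case => [yu|/andP[_ yv]]; lra.
have disj : [disjoint [set` `]-oo, u]] & [set` `]u, v]]].
  rewrite disj_set2E; apply/eqP; rewrite -subset0 => y [] /=; rewrite !in_itv /= => a /andP[b _]; lra.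
have split : Phi v = (Phi u + \int[lebesgue_measure]_(y in `]u, v]) (f y)%:E)%E.
  rewrite !hP setE ge0_integral_setU //.
  - exact: measurable_funTS.
  - by move=> y _; rewrite lee_fin.
set I := (\int[lebesgue_measure]_(y in `]u, v]) (f y)%:E)%E in split.
have I0 : (0 <= I)%E by apply: integral_ge0 => y _; rewrite lee_fin.
have Ile : (I <= (f u * (v - u))%:E)%E.
  apply: (@le_trans _ _ (\int[lebesgue_measure]_(y in `]u, v]) (cst (f u)%:E) y)%E).
    apply: ge0_le_integral => //.
    - by move=> y _; rewrite lee_fin.
    - exact: measurable_funTS.
    - by move=> y; rewrite /= in_itv /= => /andP[a b]; rewrite lee_fin hdec //; lra.
  rewrite integral_cst //. rewrite -[X in (_ * X)%E]/(lebesgue_measure [set` `]u, v]]) lebesgue_measure_itv /=.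
  case: ltP => [_|vu]; first by rewrite -EFinD -EFinM.
  have -> : v = u by apply/le_anti/andP.
  by rewrite subrr mulr0 mule0.
have Ige : ((f v * (v - u))%:E <= I)%E.
  apply: (@le_trans _ _ (\int[lebesgue_measure]_(y in `]u, v]) (cst (f v)%:E) y)%E); last first.
    apply: ge0_le_integral => //.
    - by move=> y _; rewrite lee_fin.
    - exact: measurable_funTS.
    - by move=> y; rewrite /= in_itv /= => /andP[a b]; rewrite lee_fin hdec //; lra.
  rewrite integral_cst //. rewrite -[X in (_ * X)%E]/(lebesgue_measure [set` `]u, v]]) lebesgue_measure_itv /=.
  case: ltP => [_|vu]; first by rewrite -EFinD -EFinM.
  have -> : v = u by apply/le_anti/andP.
  by rewrite subrr mulr0 mule0.
have Ifin : I \is a fin_num.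
  rewrite fin_numElt; apply/andP; split.
    by apply: lt_le_trans I0; exact: ltNyr.
  by apply: le_lt_trans Ile _; exact: ltry.
rewrite split fineD ?hfin //.
have -> : fine (Phi u) + fine I - fine (Phi u) = fine I by ring.
have Ile' : fine I <= f u * (v - u) by rewrite -lee_fin fineK.
have Ige' : f v * (v - u) <= fine I by rewrite -lee_fin fineK.
apply/andP; split; lra.
Qed.
Lemma P_le_cdf (R : realType) (d : measure_display) (T : measurableType d)
  (P : probability T R) (X : {RV P >-> R}) x :
  P [set w | X w <= x] = cdf X x.
Proof.
rewrite /cdf /distribution /pushforward /=; congr (P _).
Qed.
Lemma P_gt_ccdf (R : realType) (d : measure_display) (T : measurableType d)
  (P : probability T R) (X : {RV P >-> R}) x :
  P [set w | x < X w] = ccdf X x.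
Proof.
rewrite /ccdf /distribution /pushforward /=; congr (P _).
by apply/seteqP; split => w /=; rewrite in_itv /= andbT.
Qed.
Lemma FG1 (R : realType) (d : measure_display) (T : measurableType d)
  (P : probability T R) (X : {RV P >-> R}) x :
  fine (P [set w | X w <= x]) + fine (P [set w | x < X w]) = 1.
Proof.
rewrite P_le_cdf P_gt_ccdf -fineD ?fin_num_measure //.
by rewrite cdf_ccdf_1.
Qed.
Lemma G_noninc (R : realType) (d : measure_display) (T : measurableType d)
  (P : probability T R) (X : {RV P >-> R}) u v : u <= v ->
  fine (P [set w | v < X w]) <= fine (P [set w | u < X w]).
Proof.
move=> uv; rewrite !P_gt_ccdf fine_le ?fin_num_measure //.
exact: ccdf_nonincreasing.
Qed.
Lemma G_ge0 (R : realType) (d : measure_display) (T : measurableType d)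
  (P : probability T R) (X : {RV P >-> R}) u :
  0 <= fine (P [set w | u < X w]).
Proof. by apply: fine_ge0. Qed.

Lemma dens_log (R : realType) (L G f : R -> R) (x0 x1 alpha : R) :
  0 < alpha -> 0 < x0 ->
  (forall x, 0 < x -> 0 < L x) ->
  L (2 * x) / L x @[x --> +oo] --> (1:R) ->
  (forall u v, u <= v -> G v <= G u) ->
  (forall x, x0 < x -> G x = x `^ (- alpha) * L x) ->
  (forall u v, x1 <= u -> u <= v -> (v - u) * f v <= G u - G v <= (v - u) * f u) ->
  forall delta, 0 < delta -> exists K Y, 0 < Y /\
    forall t, Y <= t -> 0 < f t /\ `|ln (f t) + (alpha + 1) * ln t| <= K + delta * ln t.
Proof.
move=> a0 x00 Lpos Lcvg Gdec GL hdiff delta d0.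
have [Y0 [Y01 [Y0x HY0]]] := slow_log a0 x00 Lpos Lcvg Gdec GL d0.
have [th [C [Xr [/andP[th0 th1] [C0 [Xrx HXr]]]]]] := ratio_bounds a0 x00 Lpos Lcvg GL.
have ln2 : 0 < ln (2:R) by rewrite ln_gt0 // ltr1n.
exists (ln 2 * (1 + alpha) - ln (1 - th)).
exists (Num.max (2 * Y0) (Num.max Xr (Num.max (2 * x1) (2 * x0 + 2)))).
split; first by rewrite lt_max; apply/orP; left; lra.
move=> t; rewrite !ge_max => /and4P[tY tX tx1 tx0].
have t0 : 0 < t by lra.
have Gt : 0 < G t by rewrite GL; [apply: mulr_gt0; [apply: powR_gt0|apply: Lpos] | ]; lra.
have [r1 _] := HXr t tX.
have d1 := hdiff t (2 * t) ltac:(lra) ltac:(lra).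
have d2 := hdiff (t / 2) t ltac:(lra) ltac:(lra).
move: d1 d2 => /andP[_ d1] /andP[d2 _].
rewrite (_ : 2 * t - t = t) in d1; last by ring.
rewrite (_ : t - t / 2 = t / 2) in d2; last by field.
have G2 : 0 <= G (2 * t).
  rewrite GL; last lra.
  by apply: mulr_ge0; [apply: powR_ge0 | apply: ltW; apply: Lpos; lra].
have flow : (1 - th) * G t / t <= f t.
  rewrite ler_pdivrMr //.
  have -> : (1 - th) * G t = G t - th * G t by ring.
  rewrite mulrC; lra.
have fpos : 0 < f t.
  apply: lt_le_trans flow; apply: divr_gt0 => //; apply: mulr_gt0 => //; lra.
split => //.
have Gt2 : 0 < G (t / 2).
  by rewrite GL; [apply: mulr_gt0; [apply: powR_gt0|apply: Lpos] | ]; lra.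
have fup : f t <= 2 * G (t / 2) / t.
  rewrite ler_pdivlMr //.
  have : 0 <= G t by lra.
  have -> : f t * t = 2 * (t / 2 * f t) by field.
  lra.
have tx0' : x0 < t by lra.
have tx0'' : x0 < t / 2 by lra.
have lnGt := lnG_eq x00 Lpos GL tx0'.
have lnGt2 := lnG_eq x00 Lpos GL tx0''.
have lt2 : ln (t / 2) = ln t - ln 2 by rewrite ln_div ?posrE //; lra.
have HL1 := HY0 t ltac:(lra).
have HL2 := HY0 (t / 2) ltac:(lra).
have lt0 : 0 <= ln (t / 2) by rewrite ln_ge0 //; lra.
have th2' : 0 < 1 - th by lra.
have q1 : 0 < (1 - th) * G t / t by apply: divr_gt0 => //; apply: mulr_gt0.
have q2 : 0 < 2 * G (t / 2) / t by apply: divr_gt0 => //; apply: mulr_gt0.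
have l1 : ln ((1 - th) * G t / t) <= ln (f t) by rewrite ler_ln ?posrE.
have l2 : ln (f t) <= ln (2 * G (t / 2) / t) by rewrite ler_ln ?posrE.
have th2 : 0 < 1 - th by lra.
have p1 : 0 < (1 - th) * G t by apply: mulr_gt0.
have p2 : 0 < 2 * G (t / 2) by apply: mulr_gt0.
have e_l1 : ln ((1 - th) * G t / t) = ln (1 - th) + ln (G t) - ln t.
  by rewrite ln_div ?posrE // lnM ?posrE.
have e_l2 : ln (2 * G (t / 2) / t) = ln 2 + ln (G (t / 2)) - ln t.
  by rewrite ln_div ?posrE // lnM ?posrE.
rewrite e_l1 in l1; rewrite e_l2 in l2.
have lnth : ln (1 - th) <= 0 by rewrite ln_le0 //; lra.
have h1 := ler_norm (ln (L t)); have h2 := ler_norm (- ln (L t)).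
have h3 := ler_norm (ln (L (t/2))); have h4 := ler_norm (- ln (L (t/2))).
rewrite normrN in h2 h4.
have hh1 : delta * ln (t / 2) <= delta * ln t by rewrite ler_pM2l //; lra.
have hh2 : 0 <= alpha * ln 2 by apply: mulr_ge0; lra.
have e1 : alpha * ln (t/2) = alpha * ln t - alpha * ln 2 by rewrite lt2; ring.
have -> : ln 2 * (1 + alpha) - ln (1 - th) = ln 2 + alpha * ln 2 - ln (1 - th) by ring.
have -> : ln (f t) + (alpha + 1) * ln t = ln (f t) + alpha * ln t + ln t by ring.
rewrite ler_norml; apply/andP; split; lra.
Qed.
Lemma an_props (R : realType) (F G : R -> R) (u B : R) :
  (forall x, F x + G x = 1) -> (forall x y, x <= y -> G y <= G x) ->
  1 - u < G B -> (exists y, G y <= 1 - u) ->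
  let a := inf [set x : R | u <= F x] in
  B <= a /\ (forall y, y < a -> 1 - u < G y) /\ (forall y, a < y -> G y <= 1 - u).
Proof.
move=> FG Gdec GB [y0 Gy0] a.
have ne : [set x : R | u <= F x] !=set0.
  by exists y0; rewrite /=; have := FG y0; lra.
have lb : lbound [set x : R | u <= F x] B.
  move=> z /= uz; rewrite leNgt; apply/negP => zB.
  have := Gdec _ _ (ltW zB); have := FG z; lra.
have hl : has_lbound [set x : R | u <= F x] by exists B.
split; first exact: lb_le_inf.
split.
  move=> y ya; rewrite ltNge; apply/negP => Gy.
  have : a <= y by apply: ge_inf => //=; have := FG y; lra.
  lra.
move=> y ay.
have [s /= us sy] := inf_lt ne ay.
have := Gdec _ _ (ltW sy); have := FG s; lra.
Qed.
Lemma lam_bound (R : realType) (alpha d2 eta l lam ln2 Lp Lm : R) :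
  0 < alpha -> 0 < d2 -> d2 <= alpha / 2 -> d2 <= eta * alpha / 4 -> 0 < eta ->
  eta <= 1/2 -> 0 < ln2 -> ln2 <= lam -> 0 < l ->
  Lp - alpha * (ln2 + lam) <= - l -> `|Lp| <= d2 * (ln2 + lam) ->
  - l < Lm - alpha * (lam - ln2) -> `|Lm| <= d2 * (lam - ln2) ->
  `|l - alpha * lam| <= eta / 2 * l + 3 * alpha * ln2 /\ lam <= 2 * l / alpha + ln2.
Proof.
move=> a0 d0 d21 d22 e0 e1 l20 lam2 l0 i1 j1 i2 j2.
have k1 := ler_norm (- Lp); have k2 := ler_norm Lm; rewrite normrN in k1.
have m1 : (alpha - d2) * (lam - ln2) < l.
  have : - l < d2 * (lam - ln2) - alpha * (lam - ln2) by lra.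
  have -> : (alpha - d2) * (lam - ln2) = alpha * (lam - ln2) - d2 * (lam - ln2) by ring.
  lra.
have m2 : l <= (alpha + d2) * (ln2 + lam).
  have -> : (alpha + d2) * (ln2 + lam) = alpha * (ln2 + lam) + d2 * (ln2 + lam) by ring.
  lra.
have lamup : lam <= 2 * l / alpha + ln2.
  have h : alpha / 2 * (lam - ln2) <= (alpha - d2) * (lam - ln2).
    by apply: ler_wpM2r; lra.
  have h2 : alpha * lam <= 2 * l + alpha * ln2.
    have -> : alpha * lam = 2 * (alpha / 2 * (lam - ln2)) + alpha * ln2 by field; lra.
    lra.
  have -> : 2 * l / alpha + ln2 = (2 * l + alpha * ln2) / alpha by field; lra.
  by rewrite ler_pdivlMr // mulrC.
split => //.
have d2lam : d2 * lam <= eta / 2 * l + alpha * ln2.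
  have h1 : d2 * lam <= eta * alpha / 4 * lam by apply: ler_wpM2r; lra.
  have h2 : eta * alpha / 4 * lam <= eta * alpha / 4 * (2 * l / alpha + ln2).
    apply: ler_wpM2l => //; apply: mulr_ge0; [apply: mulr_ge0|]; lra.
  rewrite (_ : eta * alpha / 4 * (2 * l / alpha + ln2) = eta / 2 * l + eta / 4 * (alpha * ln2)) in h2; last by field; lra.
  have h3 : eta / 4 * (alpha * ln2) <= alpha * ln2.
    have : 0 < alpha * ln2 by apply: mulr_gt0.
    rewrite -[X in _ <= X]mul1r; move=> h; apply: ler_wpM2r; lra.
  lra.
have d2l2 : d2 * ln2 <= alpha * ln2 by apply: ler_wpM2r; lra.
have d2l0 : 0 <= d2 * ln2 by apply: mulr_ge0; lra.
rewrite ler_norml; apply/andP; split.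
  have hh : (alpha - d2) * (lam - ln2) = alpha * lam - d2 * lam - alpha * ln2 + d2 * ln2 by ring.
  lra.
have hh : (alpha + d2) * (ln2 + lam) = alpha * ln2 + alpha * lam + d2 * ln2 + d2 * lam by ring.
lra.
Qed.

Lemma final_arith (R : realType) (alpha eps eta lnM K2 C k q l lam xi lnal lnl lnk E1 lf lg : R) :
  0 < alpha -> 0 < eps -> 0 < eta -> eta <= eps / 8 -> eta <= 1/2 ->
  0 < lnM -> 0 <= xi <= lnM -> 0 < l -> 0 <= q -> 2 * q / eta <= l ->
  `|l - alpha * lam| <= eta / 2 * l + q ->
  k = 16 / eps -> 0 <= lnl -> lnl <= lnk + l / k ->
  - (2 * C) <= E1 <= 0 ->
  0 <= lam + l / alpha * xi ->
  `|lf + (alpha + 1) * (lam + l / alpha * xi)| <=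
      K2 + eps / (8 * ((2 + lnM) / alpha)) * (lam + l / alpha * xi) ->
  lg = l + lam + (lnal - lnl) + (l / alpha - 1) * xi + E1 + lf ->
  4 * (q + lnM + `|lnal| + `|lnk| + 2 * C + `|K2|) / eps <= l ->
  `|lg / l - - xi| < eps.
Proof.
move=> a0 e0 et0 et1 et2 lM0 /andP[xi0 xi1] l0 q0 ql lamb kE lnl0 lnlk /andP[E10 E11]
  lt0 lfb lgE Dl.
set lt := lam + l / alpha * xi in lt0 lfb.
have qe : q <= eta / 2 * l.
  move: ql; rewrite ler_pdivrMr // => h.
  have -> : eta / 2 * l = (l * eta) / 2 by ring.
  lra.
have etl : eta * l <= l / 2.
  have -> : l / 2 = 1/2 * l by ring.
  by apply: ler_wpM2r; lra.
have lam1 : alpha * lam <= 3 / 2 * l.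
  have := ler_norm (- (l - alpha * lam)); rewrite normrN opprB.
  lra.
set c1 := (2 + lnM) / alpha.
have ltb : lt <= c1 * l.
  have h1 : lam <= 3 / 2 * l / alpha.
    by rewrite ler_pdivlMr // mulrC; lra.
  have h2 : l / alpha * xi <= l / alpha * lnM.
    by apply: ler_wpM2l => //; apply: divr_ge0; lra.
  have -> : c1 * l = 3 / 2 * l / alpha + l / alpha * lnM + l / (2 * alpha).
    by rewrite /c1; field; lra.
  have : 0 <= l / (2 * alpha) by apply: divr_ge0; lra.
  rewrite /lt; lra.
have c10 : 0 < c1 by apply: divr_gt0; lra.
have d1b : eps / (8 * c1) * lt <= eps / 8 * l.
  have : eps / (8 * c1) * lt <= eps / (8 * c1) * (c1 * l).
    by apply: ler_wpM2l => //; apply: divr_ge0; lra.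
  have -> : eps / (8 * c1) * (c1 * l) = eps / 8 * l by field; lra.
  done.
have id : lg + l * xi = (l - alpha * lam) - xi + lnal - lnl + E1 + (lf + (alpha + 1) * lt).
  by rewrite lgE /lt; field; lra.
have n1 := ler_norm (l - alpha * lam); have n1' := ler_norm (- (l - alpha * lam)).
have n2 := ler_norm lnal; have n2' := ler_norm (- lnal).
have n3 := ler_norm lnk; have n3' := ler_norm (- lnk).
have n4 := ler_norm K2.
have n5 := ler_norm (lf + (alpha + 1) * lt); have n5' := ler_norm (- (lf + (alpha + 1) * lt)).
rewrite !normrN in n1' n2' n3' n5'.
have lk : l / k = eps / 16 * l by rewrite kE; field; lra.
have et3 : eta / 2 * l <= eps / 16 * l.
  by apply: ler_wpM2r; lra.
have DD : q + lnM + `|lnal| + `|lnk| + 2 * C + `|K2| <= eps / 4 * l.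
  move: Dl; rewrite ler_pdivrMr // => h.
  have -> : eps / 4 * l = (l * eps) / 4 by ring.
  lra.
have el : 0 < eps * l by apply: mulr_gt0.
have lfb2 : `|lf + (alpha + 1) * lt| <= K2 + eps / 8 * l.
  by apply: le_trans lfb _; rewrite lerD2l; exact: d1b.
have key : `|lg + l * xi| < eps * l.
  rewrite id ltr_norml; apply/andP; split; lra.
have -> : lg / l - - xi = (lg + l * xi) / l by field; lra.
rewrite normrM normfV (gtr0_norm l0) ltr_pdivrMr // mulrC.
Qed.
Unset Implicit Arguments. Set Strict Implicit.

Lemma ln_1m (R : realType) (u : R) : 0 <= u <= 1/2 -> - 2 * u <= ln (1 - u).
Proof.
move=> /andP[u0 u1]; have h : 0 < 1 - u by lra.
have := ln_ge_1sub h.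
have -> : 1 - (1 - u)^-1 = - (u / (1 - u)) by field; lra.
have : u / (1 - u) <= 2 * u.
  rewrite ler_pdivrMr //.
  have -> : 2 * u * (1 - u) = u + u * (1 - 2 * u) by ring.
  have : 0 <= u * (1 - 2 * u) by apply: mulr_ge0; lra.
  lra.
lra.
Qed.

Lemma nat_big (R : realType) (x : R) (n : nat) : ((Num.truncn x).+1 <= n)%N -> x < n%:R.
Proof. by move=> h; apply: lt_le_trans (truncnS_gt x) _; rewrite ler_nat. Qed.

Lemma ln6 (R : realType) (a b c d e h : R) : 0 < a -> 0 < b -> 0 < c -> 0 < d ->
  0 < e -> 0 < h -> ln (a * b * c * d * e * h) = ln a + ln b + ln c + ln d + ln e + ln h.
Proof.
move=> a0 b0 c0 d0 e0 h0.
have ab : 0 < a * b by apply: mulr_gt0.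
have abc : 0 < a * b * c by apply: mulr_gt0.
have abcd : 0 < a * b * c * d by apply: mulr_gt0.
have abcde : 0 < a * b * c * d * e by apply: mulr_gt0.
by rewrite !lnM ?posrE.
Qed.

Theorem mainTheorem4 (R : realType) (d : measure_display) (T : measurableType d)
  (P : probability T R) (X : {RV P >-> R})
  (alpha x0 x1 : R) (L f : R -> R)
  (halpha : 0 < alpha) (hx0 : 0 < x0)
  (hL : slowly_varying L)
  (htail : forall x : R, x0 < x ->
     fine (P [set w | x < X w]) = x `^ (- alpha) * L x)
  (hf_meas : measurable_fun setT f)
  (hf_nonneg : forall x : R, 0 <= f x)
  (hdens : forall x : R,
     P [set w | X w <= x] = (\int[lebesgue_measure]_(y in `]-oo, x]) (f y)%:E)%E)
  (hf_noninc : forall x y : R, x1 <= x -> x <= y -> f y <= f x)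
  (M : R) (hM : 1 < M) :
  let F := distr_fun P X in
  let a := fun n : nat => gen_left_inverse F (1 - n%:R^-1) in
  let t := fun (n : nat) (x : R) => a n * x `^ (ln n%:R / alpha) in
  let g := fun (n : nat) (x : R) =>
    n%:R * a n * (alpha / ln n%:R) * x `^ (ln n%:R / alpha - 1)
      * F (t n x) ^+ n.-1 * f (t n x) in
  forall eps : R, 0 < eps ->
    exists N : nat, forall n : nat, (N <= n)%N -> (2 <= n)%N ->
      forall x : R, 1 <= x <= M ->
        `| ln (g n x) / ln n%:R - (- ln x) | < eps.
Proof.
move=> F a t g eps eps0.
pose G x := fine (P [set w | x < X w]).
have FG : forall x, F x + G x = 1 by move=> x; exact: FG1.
have Gdec : forall u v, u <= v -> G v <= G u by move=> u v; exact: G_noninc.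
have G0 : forall x, 0 <= G x by move=> x; exact: G_ge0.
have GL : forall x, x0 < x -> G x = x `^ (- alpha) * L x by exact: htail.
case: hL => Lpos Lcvg'.
have Lcvg := Lcvg' 2 ltac:(lra).
have hdiff : forall u v, x1 <= u -> u <= v ->
    (v - u) * f v <= G u - G v <= (v - u) * f u.
  move=> u v uv1 uv.
  have hfin : forall x, P [set w | X w <= x] \is a fin_num.
    by move=> x; rewrite P_le_cdf fin_num_measure.
  have := dens_diff hf_meas hf_nonneg hdens hfin hf_noninc uv1 uv.
  have := FG u; have := FG v; rewrite /F /distr_fun => e1 e2.
  have -> : G u - G v = fine (P [set w | X w <= v]) - fine (P [set w | X w <= u]) by lra.
  done.
have ln2 : 0 < ln (2:R) by rewrite ln_gt0 // ltr1n.
have lnM0 : 0 < ln M by rewrite ln_gt0.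
set c1 := (2 + ln M) / alpha.
have c10 : 0 < c1 by apply: divr_gt0 => //; lra.
set d1 := eps / (8 * c1).
have d10 : 0 < d1 by apply: divr_gt0 => //; lra.
have [K2 [Yf [Yf0 HYf]]] := dens_log halpha hx0 Lpos Lcvg Gdec GL hdiff d10.
set eta := Num.min (1/2) (eps/8).
have eta0 : 0 < eta by rewrite lt_min; apply/andP; split; lra.
have eta1 : eta <= 1/2 by rewrite ge_min lexx.
have eta2 : eta <= eps/8 by rewrite ge_min lexx orbT.
set d2 := Num.min (alpha/2) (eta * alpha / 4).
have d20 : 0 < d2 by rewrite lt_min; apply/andP; split; [lra| apply: divr_gt0 => //; apply: mulr_gt0].
have d21 : d2 <= alpha/2 by rewrite ge_min lexx.
have d22 : d2 <= eta * alpha / 4 by rewrite ge_min lexx orbT.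
have [Ya [Ya1 [Yax HYa]]] := slow_log halpha hx0 Lpos Lcvg Gdec GL d20.
have a20 : 0 < alpha / 2 by lra.
have [Ys [Ys1 [Ysx HYs]]] := slow_log halpha hx0 Lpos Lcvg Gdec GL a20.
have [th [C [Xr [thb [C0 [Xrx HXr]]]]]] := ratio_bounds halpha hx0 Lpos Lcvg GL.
set B := Num.max (2 * Ya) (Num.max Xr (Num.max Yf (2 * x0 + 2))).
have BYa : 2 * Ya <= B by rewrite le_max lexx.
have BXr : Xr <= B by rewrite !le_max lexx orbT.
have BYf : Yf <= B by rewrite !le_max lexx !orbT.
have Bx0 : 2 * x0 + 2 <= B by rewrite !le_max lexx !orbT.
have GBpos : 0 < G B.
  by rewrite GL; [apply: mulr_gt0; [apply: powR_gt0|apply: Lpos] | ]; lra.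
have Gsmall : forall n : nat, (0 < n)%N -> exists y, G y <= n%:R^-1.
  move=> n n0; have nR : 0 < n%:R :> R by rewrite ltr0n.
  exists (Num.max Ys (expR (2 * ln n%:R / alpha))).
  set y := Num.max _ _.
  have yYs : Ys <= y by rewrite le_max lexx.
  have ye : expR (2 * ln n%:R / alpha) <= y by rewrite le_max lexx orbT.
  have y0 : 0 < y by lra.
  have Gy : 0 < G y by rewrite GL; [apply: mulr_gt0; [apply: powR_gt0|apply: Lpos] | ]; lra.
  have lny : 2 * ln n%:R / alpha <= ln y.
    by rewrite -[X in X <= _]expRK ler_ln ?posrE ?expR_gt0.
  have := HYs y yYs; have := lnG_eq hx0 Lpos GL (_ : x0 < y).
  move=> /(_ ltac:(lra)) e1 e2.
  rewrite -[G y]lnK ?posrE // -[n%:R^-1]lnK ?posrE ?invr_gt0 // ler_expR lnV ?posrE //.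
  have h2 := ler_norm (ln (L y)).
  have : ln n%:R <= alpha / 2 * ln y.
    move: lny; rewrite ler_pdivrMr //; lra.
  lra.
set k := 16 / eps.
have k0 : 0 < k by apply: divr_gt0; lra.
set D := 3 * alpha * ln 2 + ln M + `|ln alpha| + `|ln k| + 2 * C + `|K2|.
have D0 : 0 <= D.
  have : 0 <= alpha * ln 2 by apply: mulr_ge0; lra.
  rewrite /D; have := normr_ge0 (ln alpha); have := normr_ge0 (ln k); have := normr_ge0 K2.
  lra.
set l0 := Num.max 1 (Num.max (6 * alpha * ln 2 / eta) (4 * D / eps)).
have l01 : 1 <= l0 by rewrite le_max lexx.
have l02 : 6 * alpha * ln 2 / eta <= l0 by rewrite !le_max lexx orbT.
have l03 : 4 * D / eps <= l0 by rewrite !le_max lexx !orbT.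
exists (maxn (maxn 2 (Num.truncn (2 * C)).+1)
             (maxn (Num.truncn (G B)^-1).+1 (Num.truncn (expR l0)).+1)).
move=> n; rewrite !geq_max => /andP[/andP[n2 nC] /andP[nG nl]] _ x /andP[x1' xM].
have nR : (2:R) <= n%:R by rewrite ler_nat.
have n0 : 0 < n%:R :> R by lra.
have nC' := @nat_big R _ _ nC.
have nG' := @nat_big R _ _ nG.
have nl' := @nat_big R _ _ nl.
set l := ln n%:R.
have ll0 : l0 < l.
  by rewrite /l -[l0]expRK ltr_ln ?posrE ?expR_gt0.
have l0' : 0 < l by lra.
have invn : n%:R^-1 < G B.
  by rewrite -[G B]invrK ltf_pV2 ?posrE ?invr_gt0.
have e1n : 1 - (1 - n%:R^-1) = n%:R^-1 :> R by ring.
have Ha := @an_props R F G (1 - n%:R^-1) B FG Gdec.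
rewrite e1n in Ha.
have [aB [alo ahi]] := Ha invn (Gsmall n (ltnW n2)).
set an := a n.
have anE : an = inf [set x : R | 1 - n%:R^-1 <= F x] by [].
rewrite -anE in aB alo ahi.
have an0 : 0 < an by clear -aB Bx0 hx0; lra.
have a2x : x0 < 2 * an by clear -aB Bx0 hx0; lra.
have ax2 : x0 < an / 2 by clear -aB Bx0 hx0; lra.
have aYa : Ya <= an / 2 by clear -aB BYa; lra.
set lam := ln an.
have G2a : G (2 * an) <= n%:R^-1 by apply: ahi; clear -an0; lra.
have Ga2 : n%:R^-1 < G (an / 2) by apply: alo; clear -an0; lra.
have lnninv : ln (n%:R^-1) = - l by rewrite lnV ?posrE.
have Gpos : forall y, x0 < y -> 0 < G y.
  move=> y yx; rewrite GL //; apply: mulr_gt0; [apply: powR_gt0 | apply: Lpos]; clear -yx hx0; lra.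
have G2a0 := Gpos _ a2x.
have Ga20 := Gpos _ ax2.
have i1 : ln (G (2 * an)) <= - l by rewrite -lnninv ler_ln ?posrE ?invr_gt0.
have i2 : - l < ln (G (an / 2)) by rewrite -lnninv ltr_ln ?posrE ?invr_gt0.
rewrite (lnG_eq hx0 Lpos GL a2x) in i1.
rewrite (lnG_eq hx0 Lpos GL ax2) in i2.
have e2a : ln (2 * an) = ln 2 + lam by rewrite lnM ?posrE.
have ea2 : ln (an / 2) = lam - ln 2 by rewrite ln_div ?posrE.
have j1 := HYa (2 * an) ltac:(clear -aYa Ya1; lra).
have j2 := HYa (an / 2) aYa.
rewrite e2a in i1 j1; rewrite ea2 in i2 j2.
have lam2 : ln 2 <= lam.
  have : 0 <= ln (an / 2) by rewrite ln_ge0 //; clear -aYa Ya1; lra.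
  clear -ea2; lra.
have [lamb lamup] := @lam_bound R alpha d2 eta l lam (ln 2) (ln (L (2 * an))) (ln (L (an / 2)))
  halpha d20 d21 d22 eta0 eta1 ln2 lam2 l0' i1 j1 i2 j2.
have xi0 : 0 <= ln x by rewrite ln_ge0.
have xi1 : ln x <= ln M by rewrite ler_ln ?posrE //; clear -x1' hM; lra.
have p0 : 0 <= l / alpha by apply: divr_ge0; clear -l0' halpha; lra.
have x0' : 0 < x by clear -x1'; lra.
have xp1 : 1 <= x `^ (l / alpha).
  by rewrite -(powRr0 x); apply: ler_powR.
set tn := t n x.
have tnE : tn = an * x `^ (l / alpha) by [].
have antn : an <= tn by rewrite tnE ler_peMr //; apply: ltW.
have tn0 : 0 < tn by apply: lt_le_trans an0 antn.
have lnt : ln tn = lam + l / alpha * ln x.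
  by rewrite tnE lnM ?posrE ?powR_gt0 // ln_powR.
have [ftpos lfb] := HYf tn (le_trans BYf (le_trans aB antn)).
rewrite lnt in lfb.
have [_ GaC] := HXr an (le_trans BXr aB).
have Gtn : G tn <= C * n%:R^-1.
  apply: le_trans (Gdec _ _ antn) _; apply: le_trans GaC _.
  by apply: ler_wpM2l; [apply: ltW|].
have Cn : C * n%:R^-1 <= 1/2.
  rewrite ler_pdivrMr //; clear -nC'; lra.
have Gtn2 : 0 <= G tn <= 1/2 by rewrite G0 /=; apply: le_trans Gtn Cn.
have Ftn : F tn = 1 - G tn by have := FG tn; clear; lra.
have Ftn0 : 0 < F tn by rewrite Ftn; move: Gtn2 => /andP[_ h]; clear -h; lra.
have lnF1 : - 2 * G tn <= ln (F tn) by rewrite Ftn; apply: ln_1m.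
have lnF2 : ln (F tn) <= 0 by rewrite ln_le0 // Ftn; move: Gtn2 => /andP[h _]; clear -h; lra.
have n1R : (n.-1%:R : R) = n%:R - 1 by rewrite -subn1 natrB // ltnW.
set E1 := n.-1%:R * ln (F tn).
have E1b : - (2 * C) <= E1 <= 0.
  apply/andP; split; last first.
    by rewrite /E1; apply: mulr_ge0_le0 => //; rewrite ler0n.
  have h1 : n.-1%:R * (- 2 * (C * n%:R^-1)) <= E1.
    by rewrite /E1; apply: ler_wpM2l; [rewrite ler0n|]; clear -lnF1 Gtn; lra.
  rewrite (_ : (n.-1%:R : R) * (- 2 * (C * n%:R^-1)) = - (2 * C) + 2 * C / n%:R) in h1; last first.
    by rewrite n1R; field; clear -n0; lra.
  have : 0 <= 2 * C / n%:R by apply: divr_ge0; clear -C0 n0; lra.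
  clear -h1; lra.
have lg : ln (g n x) = l + lam + (ln alpha - ln l) + (l / alpha - 1) * ln x + E1 + ln (f tn).
  have gE : g n x = n%:R * an * (alpha / l) * x `^ (l / alpha - 1) * F tn ^+ n.-1 * f tn by [].
  have al0 : 0 < alpha / l by apply: divr_gt0.
  have xq0 : 0 < x `^ (l / alpha - 1) by apply: powR_gt0.
  have Fp0 : 0 < F tn ^+ n.-1 by apply: exprn_gt0.
  rewrite gE ln6 //.
  rewrite ln_div ?posrE // ln_powR lnXn //.
  by rewrite /E1 mulr_natl.
have lnl0 : 0 <= ln l by rewrite ln_ge0 //; clear -ll0 l01; lra.
have lnlk : ln l <= ln k + l / k.
  have := ln_le_sub1 (divr_gt0 l0' k0).
  rewrite ln_div ?posrE //; clear; lra.
have q0 : 0 <= 3 * alpha * ln 2.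
  by apply: mulr_ge0; [apply: mulr_ge0|]; clear -halpha ln2; lra.
have ql : 2 * (3 * alpha * ln 2) / eta <= l.
  have -> : 2 * (3 * alpha * ln 2) / eta = 6 * alpha * ln 2 / eta by ring.
  clear -l02 ll0; lra.
have lt0 : 0 <= lam + l / alpha * ln x.
  have : 0 <= l / alpha * ln x by apply: mulr_ge0.
  clear -lam2 ln2; lra.
have Dl : 4 * (3 * alpha * ln 2 + ln M + `|ln alpha| + `|ln k| + 2 * C + `|K2|) / eps <= l.
  by apply: le_trans l03 (ltW ll0).
apply: (@final_arith R alpha eps eta (ln M) K2 C k (3 * alpha * ln 2) l lam (ln x) (ln alpha)
  (ln l) (ln k) E1 (ln (f tn)) (ln (g n x)) halpha eps0 eta0 eta2 eta1 lnM0 _ l0' q0 ql lamb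
  erefl lnl0 lnlk E1b lt0 lfb lg Dl).
by rewrite xi0 xi1.
Qed.
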